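(* Let $\mathcal{X}=[-1,1]^d$. There exist absolute constants $c_0,c_1,c_2>0$ such that for any $s\ge c_0$ (with $s\le d$ and $s$ dividing $d$) and any $T\ge c_1d$, \[ \mathcal{E}^{\mathrm{NA}*}(\mathcal{X},\mathcal{O}_{\mathtt{blsp},s},T,\mathcal{W}_{\mathtt{obl}})\ \ge\ c_2\cdot\frac{sd}{T}. \]
   Context: Setting: an algorithm with $T$ queries interacts with an oracle $O$ for $f:\mathcal{X}\to\mathbb{R}$: at step $t$ it queries $x_t\in\mathcal{X}$; the oracle returns a random vector $\hat g(x_t)$; this is passed through a channel $W_t$ from a family $\mathcal{W}$ and only the output $Y_t$ is observed; $x_{t+1}$ and the final output $x_T$ are (possibly randomized) functions of $Y_1,\dots,Y_t$. In a nonadaptive channel selection strategy, $W_1,\dots,W_T$ are all fixed before the start. $\mathcal{E}^{\mathrm{NA}*}(\mathcal{X},\mathcal{O},T,\mathcal{W})=\inf_\pi\inf_{S\text{ nonadaptive}}\sup_{(f,O)\in\mathcal{O}}\mathbb{E}[f(x_T)-\min_{x\in\mathcal{X}}f(x)]$. $\mathcal{W}_{\mathtt{obl}}$: oblivious sampling channels, each specified by a probability vector $(p_i)_{i\in[d]}$, outputting $g(i)e_i$ with probability $p_i$ on input $g\in\mathbb{R}^d$. Assume $d/s$ is an integer and partition $[d]$ into the blocks $\{(k-1)s+1,\dots,ks\}$, $k\in[d/s]$. A vector $v\in\mathbb{R}^d$ is $s$-block sparse if it vanishes outside a single block and all coordinates in that block have the same absolute value, lying in $[0,1]$. $\mathcal{O}_{\mathtt{blsp},s}$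 is the set of pairs $(f_v,O_v)$, $v$ $s$-block sparse, where $f_v(x)=\|x-v\|_2^2$ on $\mathcal{X}$ and $O_v$ is an oracle associated with a random vector $X\in\{-1,1\}^d$ with independent coordinates and $\mathbb{E}[X]=v$: on query $x$ at time $t$ it outputs $2(x-X_t)$, where $X_1,X_2,\dots$ are i.i.d. copies of $X$. *)

(* Defs.v *)
From HB Require Import structures.
From mathcomp Require Import all_boot all_order all_algebra.
From mathcomp Require Import all_classical all_reals all_analysis.
Unset Printing Implicit Defensive.
Import Order.TTheory GRing.Theory Num.Theory.
Local Open Scope ring_scope.

Section Defs.
Variable R : realType.

Definition Xcube (d : nat) : set ('I_d -> R) := [set x | forall i, -1 <= x i <= 1].

Definition fv (d : nat) (v x : 'I_d -> R) : R := \sum_(i < d) (x i - v i) ^+ 2.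

Definition fmin (d : nat) (v : 'I_d -> R) : R := inf [set fv d v x | x in Xcube d].

(** s-block sparse vectors: blocks are {k s, ..., k s + s - 1} (0-indexed),
    i.e. coordinate i lies in block number i %/ s, for k < d/s. *)
Definition block_sparse (d s : nat) (v : 'I_d -> R) : Prop :=
  exists k : nat, (k < d %/ s)%N /\
    exists a : R, 0 <= a <= 1 /\
      forall i : 'I_d, if (i %/ s == k)%N then `|v i| = a else v i = 0.

(** Parameter of an oblivious sampling channel: a probability vector on [d]. *)
Definition prob_vec (d : nat) (p : 'I_d -> R) : Prop :=
  (forall i, 0 <= p i) /\ \sum_(i < d) p i = 1.

(** A (randomized) algorithm with internal randomness u : U.
    [query t u h] is the query x_{t+1} made after observing h = [Y_1;...;Y_t];
    [output u h] is the final output after observing h = [Y_1;...;Y_T]. *)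
Record algorithm (U : Type) (d : nat) := Algorithm {
  query : nat -> U -> seq ('I_d -> R) -> ('I_d -> R);
  output : U -> seq ('I_d -> R) -> ('I_d -> R) }.

(** Observation history after n steps, given the algorithm's randomness u,
    the oracle samples xs (xs t i = true means X_{t+1}(i) = +1, false means -1)
    and the sampled coordinates idx (idx t = index chosen by channel W_{t+1}).
    Oracle answer: g = 2 (x - X_t); channel output: g(i) e_i. *)
Fixpoint hist (U : Type) (d : nat) (A : algorithm U d) (u : U)
    (xs : nat -> 'I_d -> bool) (idx : nat -> 'I_d) (n : nat) : seq ('I_d -> R) :=
  match n with
  | 0 => [::]
  | n'.+1 =>
      let h := hist U d A u xs idx n' in
      let x := query U d A n' u h in
      let g := fun j => 2 * (x j - (if xs n' j then 1 else -1)) in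
      rcons h (fun j => if j == idx n' then g j else 0)
  end.

Definition alg_valid (U : Type) (d : nat) (A : algorithm U d) : Prop :=
  (forall t u h, Xcube d (query U d A t u h)) /\ (forall u h, Xcube d (output U d A u h)).

Definition alg_measurable (dU : measure_display) (U : measurableType dU) (d T : nat)
    (A : algorithm U d) : Prop :=
  (forall xs idx t (j : 'I_d),
      measurable_fun setT (fun u => query U d A t u (hist U d A u xs idx t) j)) /\
  (forall xs idx (j : 'I_d),
      measurable_fun setT (fun u => output U d A u (hist U d A u xs idx T) j)).

Definition ext_xs (d T : nat) (w : {ffun 'I_T -> {ffun 'I_d -> bool}}) :
    nat -> 'I_d -> bool :=
  fun n => match insub n with Some t => w t | None => fun _ => true end.

Definition ext_idx (d T : nat) (i0 : 'I_d) (w : {ffun 'I_T -> 'I_d}) : nat -> 'I_d :=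
  fun n => match insub n with Some t => w t | None => i0 end.

(** P(X(i) = b) when E[X(i)] = a. *)
Definition px (a : R) (b : bool) : R := if b then (1 + a) / 2 else (1 - a) / 2.

(** Probability of the oracle samples / channel choices w under O_v and strategy S
    (S t = probability vector of the oblivious channel W_{t+1}). *)
Definition outcome_prob (d T : nat) (v : 'I_d -> R) (S : nat -> 'I_d -> R)
    (w : {ffun 'I_T -> {ffun 'I_d -> bool}} * {ffun 'I_T -> 'I_d}) : R :=
  \prod_(t < T) ((\prod_(i < d) px (v i) (w.1 t i)) * S t (w.2 t)).

Definition expected_error (dU : measure_display) (U : measurableType dU)
    (P : probability U R) (d T : nat) (A : algorithm U d) (S : nat -> 'I_d -> R)
    (v : 'I_d -> R) : \bar R :=
  match d as d0 return (algorithm U d0 -> (nat -> 'I_d0 -> R) -> ('I_d0 -> R) -> \bar R) with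
  | 0 => fun _ _ _ => 0%E
  | d'.+1 => fun A S v =>
      (\int[P]_u
        (\sum_(w : {ffun 'I_T -> {ffun 'I_d'.+1 -> bool}} * {ffun 'I_T -> 'I_d'.+1})
           outcome_prob d'.+1 T v S w *
           (fv d'.+1 v (output U d'.+1 A u (hist U d'.+1 A u (ext_xs d'.+1 T w.1) (ext_idx d'.+1 T ord0 w.2) T)) - fmin d'.+1 v))%:E)%E
  end A S v.

Definition ENA (d s T : nat) : \bar R :=
  ereal_inf [set e | exists (dU : measure_display) (U : measurableType dU)
      (P : probability U R) (A : algorithm U d) (S : nat -> 'I_d -> R),
      [/\ alg_valid U d A, alg_measurable dU U d T A,
          (forall t, (t < T)%N -> prob_vec d (S t)) &
          e = ereal_sup [set expected_error dU U P d T A S v | v in block_sparse d s]]].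

End Defs.

(* Main.v *)
Require Import Defs.
From HB Require Import structures.
From mathcomp Require Import all_boot all_order all_algebra.
From mathcomp Require Import all_classical all_reals all_analysis.
From mathcomp Require Import measurable_realfun.
From mathcomp.algebra_tactics Require Import ring lra.
Import Order.TTheory GRing.Theory Num.Theory.
Local Open Scope ring_scope.

Section PF.
Variables (R : realType) (d T : nat) (S : nat -> 'I_d -> R).

Lemma sum_ffun_prod (I J : finType) (F : I -> J -> R) :
  \sum_(f : {ffun I -> J}) \prod_(i : I) F i (f i) = \prod_(i : I) \sum_(j : J) F i j.
Proof. by rewrite bigA_distr_bigA. Qed.

Lemma PF (phi : 'I_T -> 'I_d -> 'I_d -> bool -> R) :
 \sum_(w : ({ffun 'I_T -> {ffun 'I_d -> bool}} * {ffun 'I_T -> 'I_d})%type)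
    \prod_(t < T) ((\prod_(k < d) phi t k (w.2 t) (w.1 t k)) * S t (w.2 t))
 = \prod_(t < T) \sum_(j < d) (\prod_(k < d) (phi t k j true + phi t k j false)) * S t j.
Proof.
rewrite -(pair_bigA _ (fun (w1 : {ffun 'I_T -> {ffun 'I_d -> bool}}) (w2 : {ffun 'I_T -> 'I_d}) => \prod_(t < T) ((\prod_(k < d) phi t k (w2 t) (w1 t k)) * S t (w2 t)))) /= exchange_big /=.
under eq_bigr => w2 _.
  rewrite (sum_ffun_prod _ _ (fun (t : 'I_T) (x : {ffun 'I_d -> bool}) => (\prod_(k < d) phi t k (w2 t) (x k)) * S t (w2 t))).
  under eq_bigr => t _.
    rewrite -mulr_suml (sum_ffun_prod _ _ (fun (k : 'I_d) (b : bool) => phi t k (w2 t) b)).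
    under eq_bigr => k _ do rewrite big_bool /=.
    over.
  over.
rewrite -(sum_ffun_prod _ _ (fun (t : 'I_T) (j : 'I_d) => (\prod_(k < d) (phi t k j true + phi t k j false)) * S t j)).
by []. Qed.
End PF.

Lemma hist_eq (R : realType) U d (A : algorithm R U d) u xs xs' idx n :
  (forall m, (m < n)%N -> xs m (idx m) = xs' m (idx m)) ->
  hist R U d A u xs idx n = hist R U d A u xs' idx n.
Proof.
elim: n => [//|n IH] H /=.
rewrite IH; last by move=> m Hm; apply: H; apply: ltnW.
congr rcons; apply: funext => j.
case: eqP => // ->; by rewrite H.
Qed.

Lemma prod_bound (R : realType) (I : Type) (r : seq I) (x : I -> R) :
  (forall t, 0 <= x t) ->
  \prod_(t <- r) (1 + x t) * (1 - \sum_(t <- r) x t) <= 1.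
Proof.
move=> hx; elim: r => [|t r IH]; first by rewrite !big_nil subr0 mulr1.
rewrite !big_cons.
have hA : 0 <= \prod_(t <- r) (1 + x t).
  apply: prodr_ge0 => j _; have := hx j; lra.
have hs : 0 <= \sum_(t <- r) x t by apply: sumr_ge0 => j _; exact: hx.
move: IH hA hs (hx t); move: (\prod_(t <- r) (1 + x t)) (\sum_(t <- r) x t) (x t) => P s0 y.
move=> IH hA hs hy.
have h1 : 0 <= P * y * s0 by rewrite mulr_ge0 // mulr_ge0.
have h2 : 0 <= P * y * y by rewrite mulr_ge0 // mulr_ge0.
nra.
Qed.

Section LeCam.
Variables (R : realType) (U : Type) (d T : nat) (A : algorithm R U d) (i0 : 'I_d)
  (S : nat -> 'I_d -> R) (u : U).
Hypothesis HS : forall t, (t < T)%N -> prob_vec R d (S t).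
Variables (v : 'I_d -> R) (i : 'I_d) (a : R).
Hypothesis Hvi : v i = a.
Hypothesis Ha0 : 0 <= a.
Hypothesis Ha2 : a ^+ 2 <= 1/2.
Hypothesis Hv : forall k, -1 < v k < 1.

Local Notation W := ({ffun 'I_T -> {ffun 'I_d -> bool}} * {ffun 'I_T -> 'I_d})%type.
Definition Fo (w : W) : 'I_d -> R :=
  output R U d A u (hist R U d A u (ext_xs d T w.1) (ext_idx d T i0 w.2) T).

Definition v' k := if k == i then - a else v k.
Definition qv (j k : 'I_d) := if k == i then (if j == i then - a else a) else v k.
Definition psi (w : W) : W :=
  ([ffun t => [ffun k => if (k == i) && (w.2 t != i) then ~~ w.1 t k else w.1 t k]], w.2).
Definition Qp (w : W) := \prod_(t < T) ((\prod_(k < d) px R (qv (w.2 t) k) (w.1 t k)) * S t (w.2 t)).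
Definition rho (w : W) := \prod_(t < T)
   ((\prod_(k < d) px R (v k) (w.1 t k)) / \prod_(k < d) px R (qv (w.2 t) k) (w.1 t k)).
Definition K0 := (1 + 3 * a ^+ 2) / (1 - a ^+ 2).

Lemma a_lt1 : a < 1.
Proof. have := Hv i; rewrite Hvi => /andP[_ ->] //. Qed.

Lemma px_flip x b : px R (- x) (~~ b) = px R x b.
Proof. by case: b; rewrite /px /= ?opprK. Qed.

Lemma px_sum x : px R x true + px R x false = 1.
Proof. by rewrite /px /=; field. Qed.

Lemma px_gt0 x b : -1 < x < 1 -> 0 < px R x b.
Proof. move=> /andP[h1 h2]; case: b; rewrite /px /=; apply: divr_gt0 => //; lra. Qed.

Lemma qv_bnd j k : -1 < qv j k < 1.
Proof.
rewrite /qv; case: (k == i) => /=; last exact: Hv.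
have h : a < 1 by exact: a_lt1.
have h0 : 0 <= a by exact: Ha0.
case: (j == i) => /=; apply/andP; split; lra.
Qed.

Lemma psiK : cancel psi psi.
Proof.
move=> [w1 w2]; rewrite /psi /=; congr pair; apply/ffunP => t; apply/ffunP => k.
rewrite !ffunE; case: (_ && _) => //=; by rewrite negbK.
Qed.

Lemma P'psi w : outcome_prob R d T v' S (psi w) = Qp w.
Proof.
rewrite /outcome_prob /Qp; apply: eq_bigr => t _ /=; congr (_ * _).
apply: eq_bigr => k _; rewrite !ffunE /v' /qv.
case: (k =P i) => [->|_] //=.
by case: (w.2 t =P i) => //= _; rewrite px_flip.
Qed.

Lemma Fo_psi w : Fo (psi w) = Fo w.
Proof.
rewrite /Fo; congr output; apply: hist_eq => m _.
rewrite /ext_xs /ext_idx; case: insubP => [t _ _|_] //=.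
rewrite !ffunE; by case: (w.2 t =P i) => //= ->; rewrite eqxx.
Qed.


Lemma S_ge0 (t : 'I_T) j : 0 <= S t j.
Proof. by case: (HS _ (ltn_ord t)) => h _; apply: h. Qed.

Lemma B_gt0 (w : W) (t : 'I_T) : 0 < \prod_(k < d) px R (qv (w.2 t) k) (w.1 t k).
Proof. apply: prodr_gt0 => k _; apply: px_gt0; exact: qv_bnd. Qed.

Lemma A_gt0 (w : W) (t : 'I_T) : 0 < \prod_(k < d) px R (v k) (w.1 t k).
Proof. apply: prodr_gt0 => k _; apply: px_gt0; exact: Hv. Qed.

Lemma Qp_ge0 w : 0 <= Qp w.
Proof.
apply: prodr_ge0 => t _; apply: mulr_ge0; last exact: S_ge0.
exact: ltW (B_gt0 w t).
Qed.

Lemma rho_ge0 w : 0 <= rho w.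
Proof.
apply: prodr_ge0 => t _; apply: divr_ge0; apply: ltW; [exact: A_gt0|exact: B_gt0].
Qed.

Lemma P_eq w : outcome_prob R d T v S w = Qp w * rho w.
Proof.
rewrite /outcome_prob /Qp /rho -big_split /=; apply: eq_bigr => t _.
have := B_gt0 w t; move: (\prod_(k < d) px R (qv (w.2 t) k) (w.1 t k)) => B HB.
have HB' : B != 0 by rewrite gt_eqF.
by field.
Qed.

Lemma Qrho2 w : Qp w * rho w ^+ 2 = \prod_(t < T)
   ((\prod_(k < d) (px R (v k) (w.1 t k) ^+ 2 / px R (qv (w.2 t) k) (w.1 t k))) * S t (w.2 t)).
Proof.
rewrite /Qp /rho -prodrXl -big_split /=; apply: eq_bigr => t _.
rewrite prodf_div prodrXl.
have := B_gt0 w t; move: (\prod_(k < d) px R (qv (w.2 t) k) (w.1 t k)) => B HB.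
have HB' : B != 0 by rewrite gt_eqF.
by field.
Qed.

Lemma sum_S (t : 'I_T) : \sum_(j < d) S t j = 1.
Proof. by case: (HS _ (ltn_ord t)). Qed.

Lemma sumP : \sum_(w : W) outcome_prob R d T v S w = 1.
Proof.
rewrite /outcome_prob (@PF R d T S (fun t k j b => px R (v k) b)).
have E : \prod_(k < d) (px R (v k) true + px R (v k) false) = 1.
  by apply: big1 => k _; exact: px_sum.
apply: big1 => t _; under eq_bigr => j _ do rewrite E mul1r.
exact: sum_S.
Qed.

Lemma sumQ : \sum_(w : W) Qp w = 1.
Proof.
rewrite /Qp (@PF R d T S (fun t k j b => px R (qv j k) b)).
have E j : \prod_(k < d) (px R (qv j k) true + px R (qv j k) false) = 1.
  by apply: big1 => k _; exact: px_sum.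
apply: big1 => t _; under eq_bigr => j _ do rewrite E mul1r.
exact: sum_S.
Qed.

Lemma sumQrho : \sum_(w : W) Qp w * rho w = 1.
Proof. by under eq_bigr => w _ do rewrite -P_eq; exact: sumP. Qed.


Lemma sqdiv (x : R) : x ^+ 2 / x = x.
Proof. have [->|nz] := eqVneq x 0; first by rewrite expr0n mul0r. by field. Qed.

Lemma pair_sum j k :
  px R (v k) true ^+ 2 / px R (qv j k) true + px R (v k) false ^+ 2 / px R (qv j k) false
  = if (k == i) && (j == i) then K0 else 1.
Proof.
rewrite /qv; case: (k =P i) => [->|_] /=; last by rewrite !sqdiv px_sum.
rewrite Hvi; case: (j =P i) => _ /=; last by rewrite !sqdiv px_sum.
have h1 : a < 1 by exact: a_lt1.
have h0 : 0 <= a by exact: Ha0.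
have n1 : 1 - a != 0 by rewrite gt_eqF // subr_gt0.
have n2 : 1 + a != 0 by rewrite gt_eqF //; lra.
have n3 : 1 - a ^+ 2 != 0.
  by rewrite gt_eqF // subr_gt0 expr2; nra.
rewrite /px /K0 /=; rewrite opprK; field.
by rewrite n1 n2 n3.
Qed.

Lemma sumQrho2 : \sum_(w : W) Qp w * rho w ^+ 2 = \prod_(t < T) (1 + S t i * (K0 - 1)).
Proof.
under eq_bigr => w _ do rewrite Qrho2.
rewrite (@PF R d T S (fun t k j b => px R (v k) b ^+ 2 / px R (qv j k) b)).
apply: eq_bigr => t _.
under eq_bigr => j _.
  under eq_bigr => k _ do rewrite pair_sum.
  rewrite (bigD1 i) //= eqxx /= big1 ?mulr1; last by move=> k /negbTE ->.
  over.
have := sum_S t; rewrite (bigD1 i) //= => E.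
rewrite (bigD1 i) //= eqxx.
under eq_bigr => j /negbTE -> do rewrite mul1r.
have -> : \sum_(j < d | j != i) S t j = 1 - S t i by rewrite -E addrC addrK.
ring.
Qed.

Lemma pt_ineq (r y b : R) : 0 <= r ->
  2 * b ^+ 2 * (2 * r - r ^+ 2 - 1/4) <= r * (y - b) ^+ 2 + (y + b) ^+ 2.
Proof.
move=> r0.
have [r1|r1] := lerP 1 r.
  have h1 : 2 * r - r ^+ 2 - 1/4 <= 1.
    have := sqr_ge0 (r - 1); rewrite !expr2; nra.
  have h2 : (y - b) ^+ 2 <= r * (y - b) ^+ 2.
    by rewrite -{1}(mul1r ((y - b) ^+ 2)); apply: ler_wpM2r; [exact: sqr_ge0|].
  rewrite !expr2 in h1 h2 *; nra.
have h1 : 2 * r - r ^+ 2 - 1/4 <= r.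
  have := sqr_ge0 (r - 1/2); rewrite !expr2; nra.
have h2 : r * (y + b) ^+ 2 <= (y + b) ^+ 2.
  by rewrite -{2}(mul1r ((y + b) ^+ 2)); apply: ler_wpM2r; [exact: sqr_ge0|exact: ltW].
rewrite !expr2 in h1 h2 *; nra.
Qed.

Lemma lecam :
  2 * a ^+ 2 * (7/4 - \prod_(t < T) (1 + S t i * (K0 - 1))) <=
  \sum_(w : W) outcome_prob R d T v S w * (Fo w i - a) ^+ 2
  + \sum_(w : W) outcome_prob R d T v' S w * (Fo w i + a) ^+ 2.
Proof.
rewrite [X in _ <= _ + X](reindex_inj (can_inj psiK)) /=.
under [X in _ <= _ + X]eq_bigr => w _ do rewrite P'psi Fo_psi.
under [X in _ <= X + _]eq_bigr => w _ do rewrite P_eq.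
rewrite -big_split /=.
have E : \sum_(w : W) (2 * a ^+ 2 * (2 * (Qp w * rho w) - Qp w * rho w ^+ 2 - Qp w / 4))
   = 2 * a ^+ 2 * (7/4 - \prod_(t < T) (1 + S t i * (K0 - 1))).
  rewrite -mulr_sumr !sumrB -mulr_sumr -mulr_suml sumQrho sumQrho2 sumQ; congr (_ * _); by field.
rewrite -E; apply: ler_sum => w _.
have h := pt_ineq (rho w) (Fo w i) a (rho_ge0 w).
have -> : 2 * a ^+ 2 * (2 * (Qp w * rho w) - Qp w * rho w ^+ 2 - Qp w / 4)
   = Qp w * (2 * a ^+ 2 * (2 * rho w - rho w ^+ 2 - 1/4)) by ring.
have -> : Qp w * rho w * (Fo w i - a) ^+ 2 + Qp w * (Fo w i + a) ^+ 2
   = Qp w * (rho w * (Fo w i - a) ^+ 2 + (Fo w i + a) ^+ 2) by ring.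
by apply: ler_wpM2l; [exact: Qp_ge0|].
Qed.

Lemma K0_bound : 0 <= K0 - 1 <= 8 * a ^+ 2.
Proof.
have h1 : a < 1 by exact: a_lt1.
have h0 : 0 <= a by exact: Ha0.
have h2 : a ^+ 2 <= 1/2 by exact: Ha2.
have n3 : 0 < 1 - a ^+ 2 by lra.
have -> : K0 - 1 = 4 * a ^+ 2 / (1 - a ^+ 2).
  rewrite /K0; field; by rewrite gt_eqF.
apply/andP; split.
  by apply: divr_ge0; [rewrite mulr_ge0 // sqr_ge0|exact: ltW].
rewrite ler_pdivrMr //.
have : 0 <= a ^+ 2 by exact: sqr_ge0.
nra.
Qed.

Lemma lecam2 : 40 * a ^+ 2 * \sum_(t < T) S t i <= 1 ->
  a ^+ 2 <=
  \sum_(w : W) outcome_prob R d T v S w * (Fo w i - a) ^+ 2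
  + \sum_(w : W) outcome_prob R d T v' S w * (Fo w i + a) ^+ 2.
Proof.
move=> hn; apply: le_trans lecam.
have /andP[k0 k1] := K0_bound.
have hx : forall t : 'I_T, 0 <= S t i * (K0 - 1) by move=> t; rewrite mulr_ge0 // S_ge0.
have hb : \prod_(t < T) (1 + S t i * (K0 - 1)) * (1 - \sum_(t < T) S t i * (K0 - 1)) <= 1.
  exact: prod_bound.
rewrite -mulr_suml in hb.
have hn0 : 0 <= \sum_(t < T) S t i by apply: sumr_ge0 => t _; exact: S_ge0.
have hP : 0 <= \prod_(t < T) (1 + S t i * (K0 - 1)).
  by apply: prodr_ge0 => t _; have := hx t; lra.
move: hb hP hn0 hn k0 k1.
move: (K0 - 1) (\prod_(t < T) (1 + S t i * (K0 - 1))) (\sum_(t < T) S t i) => c P n.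
move=> hb hP hn0 hn k0 k1.
have ha : 0 <= a ^+ 2 by exact: sqr_ge0.
move: (a ^+ 2) ha hn k1 => b ha hn k1.
have hcn : c * n <= 1/5.
  have h : c * n <= 8 * b * n by rewrite ler_wpM2r.
  lra.
have hP' : P <= 5/4.
  have h : 0 <= P * (1 - c * n - 4/5) by apply: mulr_ge0 => //; lra.
  nra.
have h : b * (7/4 - 5/4) <= b * (7/4 - P) by rewrite ler_wpM2l //; lra.
lra.
Qed.

End LeCam.

Section Assouad.
Variables (R : realType) (U : Type) (d T s kb : nat) (A : algorithm R U d) (i0 : 'I_d)
  (S : nat -> 'I_d -> R) (u : U) (a : R).
Hypothesis HS : forall t, (t < T)%N -> prob_vec R d (S t).
Hypothesis Ha0 : 0 <= a.
Hypothesis Ha2 : a ^+ 2 <= 1/2.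

Local Notation W := ({ffun 'I_T -> {ffun 'I_d -> bool}} * {ffun 'I_T -> 'I_d})%type.
Local Notation SG := {ffun 'I_d -> bool}.

Definition vs (sg : SG) (k : 'I_d) : R :=
  if (k %/ s == kb)%N then (if sg k then a else - a) else 0.
Definition flip (k : 'I_d) (sg : SG) : SG := [ffun j => if j == k then ~~ sg j else sg j].
Definition X (k : 'I_d) (sg : SG) := \sum_(w : W) outcome_prob R d T (vs sg) S w * (Fo R U d T A i0 u w k - vs sg k) ^+ 2.

Lemma flipK k : involutive (flip k).
Proof.
move=> sg; apply/ffunP => j; rewrite !ffunE; case: (j == k) => //=; exact: negbK.
Qed.

Lemma a_lt1' : a < 1.
Proof.
have h0 : 0 <= a by exact: Ha0.
have h2 : a ^+ 2 <= 1/2 by exact: Ha2.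
rewrite expr2 in h2; nra.
Qed.

Lemma vs_bnd (sg : SG) (k : 'I_d) : -1 < vs sg k < 1.
Proof.
have h0 : 0 <= a by exact: Ha0.
have h1 : a < 1 by exact: a_lt1'.
rewrite /vs; case: (_ == _) => /=; last by apply/andP; split; lra.
case: (sg k); apply/andP; split; lra.
Qed.

Lemma pairX_true (k : 'I_d) (sg : SG) : (k %/ s == kb)%N -> sg k ->
  40 * a ^+ 2 * \sum_(t < T) S t k <= 1 ->
  a ^+ 2 <= X k sg + X k (flip k sg).
Proof.
move=> hk hs hn.
have Hvi : vs sg k = a by rewrite /vs hk hs.
have E : vs (flip k sg) = v' R d (vs sg) k a.
  apply: funext => j; rewrite /vs /v' /flip ffunE.
  case: (j =P k) => [->|_] //=; by rewrite hk hs.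
have := lecam2 R U d T A i0 S u HS (vs sg) k a Hvi Ha0 Ha2 (vs_bnd sg) hn.
rewrite /X E /v' eqxx Hvi.
by under [X in _ -> _ <= _ + X]eq_bigr => w _ do rewrite opprK.
Qed.

Lemma pairX (k : 'I_d) (sg : SG) : (k %/ s == kb)%N ->
  40 * a ^+ 2 * \sum_(t < T) S t k <= 1 ->
  a ^+ 2 <= X k sg + X k (flip k sg).
Proof.
move=> hk hn; case hs: (sg k); first exact: pairX_true.
have hs' : flip k sg k by rewrite /flip ffunE eqxx hs.
have := pairX_true k (flip k sg) hk hs' hn; by rewrite flipK addrC.
Qed.

Lemma S_ge0' (t : 'I_T) j : 0 <= S t j.
Proof. by case: (HS _ (ltn_ord t)) => h _; apply: h. Qed.

Lemma P_ge0 (sg : SG) (w : W) : 0 <= outcome_prob R d T (vs sg) S w.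
Proof.
apply: prodr_ge0 => t _; apply: mulr_ge0; last exact: S_ge0'.
apply: prodr_ge0 => k _; apply: ltW; apply: px_gt0; exact: vs_bnd.
Qed.

Lemma X_ge0 k sg : 0 <= X k sg.
Proof. apply: sumr_ge0 => w _; apply: mulr_ge0; [exact: P_ge0|exact: sqr_ge0]. Qed.

Definition NN : R := (#|{: SG}|)%:R.

Lemma sumX (k : 'I_d) : (k %/ s == kb)%N ->
  NN * (a ^+ 2 / 2) * (1 - 40 * a ^+ 2 * \sum_(t < T) S t k) <= \sum_(sg : SG) X k sg.
Proof.
move=> hk.
have hs0 : 0 <= \sum_(sg : SG) X k sg by apply: sumr_ge0 => sg _; exact: X_ge0.
have hN : 0 <= NN by rewrite /NN ler0n.
have ha : 0 <= a ^+ 2 by exact: sqr_ge0.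
have hn0 : 0 <= \sum_(t < T) S t k by apply: sumr_ge0 => t _; exact: S_ge0'.
have [hn|hn] := lerP (40 * a ^+ 2 * \sum_(t < T) S t k) 1; last first.
  apply: le_trans hs0; rewrite mulr_ge0_le0 //; first by rewrite mulr_ge0 // divr_ge0.
  lra.
have H2 : NN * a ^+ 2 <= 2 * \sum_(sg : SG) X k sg.
  have -> : 2 * \sum_(sg : SG) X k sg = \sum_(sg : SG) (X k sg + X k (flip k sg)).
    have Ef : \sum_(sg : SG) X k (flip k sg) = \sum_(sg : SG) X k sg.
      rewrite (reindex_inj (can_inj (flipK k))) /=; apply: eq_bigr => sg _; by rewrite flipK.
    rewrite big_split /= Ef; ring.
  rewrite /NN -sum1_card natr_sum mulr_suml; apply: ler_sum => sg _; rewrite mul1r.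
  exact: pairX.
have h1 : 0 <= 40 * a ^+ 2 * \sum_(t < T) S t k by rewrite !mulr_ge0.
have h3 : NN * (a ^+ 2 / 2) * (1 - 40 * a ^+ 2 * \sum_(t < T) S t k) <= NN * (a ^+ 2 / 2).
  rewrite -[leRHS]mulr1; apply: ler_wpM2l; last lra.
  by rewrite mulr_ge0 // divr_ge0.
lra.
Qed.

Hypothesis Hval : alg_valid R U d A.

Definition Err (sg : SG) := \sum_(w : W) outcome_prob R d T (vs sg) S w *
  (fv R d (vs sg) (Fo R U d T A i0 u w) - fmin R d (vs sg)).

Lemma fv_ge0 (v x : 'I_d -> R) : 0 <= fv R d v x.
Proof. apply: sumr_ge0 => k _; exact: sqr_ge0. Qed.

Lemma fmin_le (v x : 'I_d -> R) : Xcube R d x -> fmin R d v <= fv R d v x.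
Proof.
move=> hx; rewrite /fmin; apply: ge_inf; last by exists x.
exists 0 => y [z _ <-]; exact: fv_ge0.
Qed.

Lemma vs_cube sg : Xcube R d (vs sg).
Proof. move=> k; have /andP[h1 h2] := vs_bnd sg k; apply/andP; split; exact: ltW. Qed.

Lemma fv_self (v : 'I_d -> R) : fv R d v v = 0.
Proof. by rewrite /fv big1 // => k _; rewrite subrr expr0n. Qed.

Lemma Fo_cube w : Xcube R d (Fo R U d T A i0 u w).
Proof. rewrite /Fo; exact: (proj2 Hval). Qed.

Lemma Err_ge0 sg : 0 <= Err sg.
Proof.
apply: sumr_ge0 => w _; apply: mulr_ge0; first exact: P_ge0.
rewrite subr_ge0; apply: fmin_le; exact: Fo_cube.
Qed.

Lemma Err_ge sg : \sum_(k < d | (k %/ s == kb)%N) X k sg <= Err sg.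
Proof.
rewrite /X /Err exchange_big /=; apply: ler_sum => w _.
rewrite -mulr_sumr; apply: ler_wpM2l; first exact: P_ge0.
have hm : fmin R d (vs sg) <= 0 by rewrite -(fv_self (vs sg)); apply: fmin_le; exact: vs_cube.
have : \sum_(k < d | (k %/ s == kb)%N) (Fo R U d T A i0 u w k - vs sg k) ^+ 2 <= fv R d (vs sg) (Fo R U d T A i0 u w).
  rewrite /fv [X in _ <= X](bigID (fun k : 'I_d => (k %/ s == kb)%N)) /= lerDl.
  apply: sumr_ge0 => k _; exact: sqr_ge0.
lra.
Qed.

Lemma total_err : NN * (a ^+ 2 / 2) * \sum_(k < d | (k %/ s == kb)%N) (1 - 40 * a ^+ 2 * \sum_(t < T) S t k)
  <= \sum_(sg : SG) Err sg.
Proof.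
apply: le_trans (_ : \sum_(sg : SG) \sum_(k < d | (k %/ s == kb)%N) X k sg <= _); last first.
  apply: ler_sum => sg _; exact: Err_ge.
rewrite exchange_big /= mulr_sumr; apply: ler_sum => k hk; exact: sumX.
Qed.

End Assouad.

Lemma block_choice (R : realType) (d s : nat) (f : 'I_d -> R) :
  (0 < s)%N -> (s %| d)%N -> (0 < d)%N ->
  exists kb, (kb < d %/ s)%N /\
    \sum_(k < d) f k <= (\sum_(k < d | (k %/ s == kb)%N) f k) * (d %/ s)%:R.
Proof.
move=> s0 sd d0.
set m := (d %/ s)%N.
have hk (k : 'I_d) : (k %/ s < m)%N.
  by rewrite ltn_divLR // /m divnK.
have m0 : (0 < m)%N by apply: leq_ltn_trans (hk (Ordinal d0)).
have E : \sum_(k < d) f k = \sum_(kb < m) \sum_(k < d | (k %/ s == kb)%N) f k.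
  under [RHS]eq_bigr => kb _ do rewrite big_mkcond.
  rewrite exchange_big; apply: eq_bigr => k _ /=.
  rewrite (bigD1 (Ordinal (hk k))) //= eqxx big1 ?addr0 // => j hj.
  case: eqP => // Ej; move: hj; by rewrite -val_eqE /= Ej eqxx.
case: (pselect (exists kb : 'I_m, \sum_(k < d) f k <= (\sum_(k < d | (k %/ s == kb)%N) f k) * m%:R)).
  by move=> [kb hkb]; exists kb; split.
move=> Hno; exfalso.
have Hlt : forall kb : 'I_m, (\sum_(k < d | (k %/ s == kb)%N) f k) * m%:R < \sum_(k < d) f k.
  move=> kb; rewrite ltNge; apply/negP => h; apply: Hno; by exists kb.
have := @ltr_sum R _ (index_enum 'I_m) xpredT _ _ _ (fun kb _ => Hlt kb).
rewrite -mulr_suml -E sumr_const card_ord mulr_natr ltxx.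
move=> H; suff : false by []; apply: H; apply/hasP; exists (Ordinal m0) => //; exact: mem_index_enum.
Qed.


Lemma Err_meas (R : realType) (dU : measure_display) (U : measurableType dU) d T s kb
  (A : algorithm R U d) i0 S a sg :
  alg_measurable R dU U d T A ->
  measurable_fun setT (fun u => Err R U d T s kb A i0 S u a sg).
Proof.
move=> Hm; rewrite /Err.
apply: measurable_sum => w.
apply: measurable_realfun.measurable_funM; first exact: measurable_cst.
apply: measurable_realfun.measurable_funB; last exact: measurable_cst.
rewrite /fv; apply: measurable_sum => k.
apply: measurable_realfun.measurable_funX.
apply: measurable_realfun.measurable_funB; last exact: measurable_cst.
exact: (proj2 Hm).
Qed.

Theorem theorem12 (R : realType) :
  exists c0 c1 c2 : R, [/\ 0 < c0, 0 < c1, 0 < c2 &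
    forall d s T : nat,
      c0 <= s%:R -> (s <= d)%N -> (s %| d)%N -> c1 * d%:R <= T%:R ->
      ((c2 * (s%:R * d%:R / T%:R))%:E <= ENA R d s T)%E].
Proof.
exists 1, 1, (1/320); split; [by []|by []|by rewrite mul1r invr_gt0 ltr0n|].
move=> d s T hs hsd hdvd hT.
have s0 : (0 < s)%N by rewrite -(ler1n R).
have d0 : (0 < d)%N := leq_trans s0 hsd.
rewrite mul1r in hT.
have T0 : (0 < T)%N by rewrite -(ltr0n R); apply: lt_le_trans hT; rewrite ltr0n.
case: d hsd hdvd hT d0 => [//|d'] hsd hdvd hT _.
set d := d'.+1.
apply/ereal_infP => e /= [dU [U [P [A [S [Hval Hm HS ->]]]]]].
have dpos : 0 < d%:R :> R by rewrite ltr0n.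
have Tpos : 0 < T%:R :> R by rewrite ltr0n.
have spos : 0 < s%:R :> R by rewrite ltr0n.
pose a : R := Num.sqrt (d%:R / (80 * T%:R)).
have ha2 : a ^+ 2 = d%:R / (80 * T%:R) by rewrite sqr_sqrtr // divr_ge0 // mulr_ge0 // ltW.
have Ha0 : 0 <= a := sqrtr_ge0 _.
have Ha2 : a ^+ 2 <= 1/2.
  have hT' : d%:R <= T%:R :> R := hT.
  rewrite ha2 ler_pdivrMr ?mulr_gt0 //; lra.
pose f := fun k : 'I_d => 1 - 40 * a ^+ 2 * \sum_(t < T) S t k.
have [kb [hkb Hkb]] := block_choice R d s f s0 hdvd (ltn0Sn d').
have Sn : \sum_(k < d) \sum_(t < T) S t k = T%:R.
  rewrite exchange_big /=; under eq_bigr => t _ do rewrite (proj2 (HS _ (ltn_ord t))).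
  by rewrite sumr_const card_ord.
have Sf : \sum_(k < d) f k = d%:R / 2.
  rewrite /f sumrB sumr_const card_ord -mulr_sumr Sn ha2.
  field; rewrite ?gt_eqF //.
have m_eq : (d %/ s)%:R = d%:R / s%:R :> R.
  have E : ((d %/ s)%N * s)%:R = d%:R :> R by rewrite (divnK hdvd).
  by rewrite -E natrM mulfK // gt_eqF.
have HB : s%:R / 2 <= \sum_(k < d | (k %/ s == kb)%N) f k.
  move: Hkb; rewrite Sf m_eq.
  move: (\sum_(k < d | (k %/ s == kb)%N) f k) => G H.
  rewrite -(ler_pM2r (_ : 0 < d%:R / s%:R)) ?divr_gt0 //.
  apply: le_trans H; rewrite le_eqVlt; apply/orP; left; apply/eqP; field.
  by rewrite gt_eqF.
pose L : R := s%:R * d%:R / (320 * T%:R).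
have Hpt : forall u, NN R d * L <= \sum_(sg : {ffun 'I_d -> bool}) Err R U d T s kb A ord0 S u a sg.
  move=> u; apply: le_trans _ (total_err R U d T s kb A ord0 S u a HS Ha0 Ha2).
  have -> : NN R d * L = NN R d * (a ^+ 2 / 2) * (s%:R / 2).
    rewrite ha2 /L; field; rewrite ?gt_eqF //.
  apply: ler_wpM2l => //; rewrite mulr_ge0 // ?divr_ge0 ?sqr_ge0 // /NN ler0n.
pose g (sg : {ffun 'I_d -> bool}) (u : U) := (Err R U d T s kb A ord0 S u a sg)%:E.
have gm sg : measurable_fun (setT : set U) (g sg : U -> \bar R).
  by apply/measurable_EFinP; exact: Err_meas.
have g0 sg u : setT u -> (0 <= g sg u)%E.
  by move=> _; rewrite lee_fin; exact: Err_ge0.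
have Hint : ((NN R d * L)%:E <= \sum_(sg : {ffun 'I_d -> bool}) \int[P]_u g sg u)%E.
  rewrite -ge0_integral_sum //.
  apply: le_trans (_ : (\int[P]_u (cst (NN R d * L)%:E u) <= _)%E).
    by rewrite integral_cst //= probability_setT mule1.
  apply: ge0_le_integral => //.
  - move=> u _; rewrite lee_fin mulr_ge0 // /NN ?ler0n // /L divr_ge0 // ?mulr_ge0 // ltW.
  - by apply: emeasurable_sum => sg; exact: gm.
  - by move=> u _; rewrite /g sumEFin lee_fin; exact: Hpt.
have [sg Hsg] : exists sg, (L%:E <= \int[P]_u g sg u)%E.
  apply: contrapT => Hno.
  have Hlt sg : (\int[P]_u g sg u < L%:E)%E.
    rewrite ltNge; apply/negP => h; apply: Hno; by exists sg.
  have I0 sg : (0 <= \int[P]_u g sg u)%E by apply: integral_ge0 => u _; exact: g0.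
  have Ifin sg : (\int[P]_u g sg u)%E \is a fin_num.
    by rewrite ge0_fin_numE // (lt_trans (Hlt sg)) // ltry.
  move: Hint; under eq_bigr => sg _ do rewrite -(fineK (Ifin sg)).
  rewrite sumEFin lee_fin => H.
  have : \sum_(sg : {ffun 'I_d -> bool}) fine (\int[P]_u g sg u) < NN R d * L.
    rewrite /NN -sum1_card natr_sum mulr_suml.
    apply: ltr_sum.
      by apply/hasP; exists [ffun=> true]; rewrite ?mem_index_enum.
    move=> sg' _; rewrite mul1r -lte_fin fineK //; exact: Hlt.
  by rewrite ltNge H.
have -> : 1 / 320 * (s%:R * d%:R / T%:R) = L by rewrite /L; field; rewrite gt_eqF.
apply: le_trans Hsg _; apply: ereal_sup_ubound.
exists (vs R d s kb a sg); last by [].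
exists kb; split => //; exists a; split.
  apply/andP; split => //.
  have h2 : a ^+ 2 <= 1/2 by exact: Ha2.
  have h0 : 0 <= a by exact: Ha0.
  rewrite expr2 in h2; nra.
move=> i; rewrite /vs; case: (_ == kb) => //=.
by case: (sg i); rewrite ?normrN ger0_norm.
Qed.
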